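(* Let $q$ and $k$ be odd positive integers and $m$ an even positive integer. No latin square of order $mq$ of $q$-step type possesses a $k$-plex.
   Context: A latin square of order $n$ is an $n\times n$ array of $n$ symbols in which each symbol occurs exactly once in each row and column. A $k$-plex in a latin square of order $n$ is a set of $kn$ cells containing exactly $k$ cells from each row, exactly $k$ cells from each column, and exactly $k$ occurrences of each symbol. A latin square of order $mq$ is of $q$-step type if it can be partitioned into an $m\times m$ array of $q\times q$ blocks $A_{ij}$ such that each block is a latin subsquare of order $q$ and two blocks $A_{ij}$, $A_{i'j'}$ contain the same set of symbols if and only if $i+j\equiv i'+j'\pmod m$. *)

(* Defs.v *)
From mathcomp Require Import all_boot.
Set Implicit Arguments. Unset Strict Implicit. Unset Printing Implicit Defensive.

Definition latin_square (n : nat) (L : 'I_n -> 'I_n -> 'I_n) : Prop :=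
  (forall r, injective (L r)) /\ (forall c, injective (fun r => L r c)).

Definition kplex (n : nat) (L : 'I_n -> 'I_n -> 'I_n) (k : nat)
    (P : {set 'I_n * 'I_n}) : Prop :=
  #|P| = k * n /\
  (forall r : 'I_n, #|[set x in P | x.1 == r]| = k) /\
  (forall c : 'I_n, #|[set x in P | x.2 == c]| = k) /\
  (forall s : 'I_n, #|[set x in P | L x.1 x.2 == s]| = k).

Definition block_cells (n q : nat) (i j : nat) : {set 'I_n * 'I_n} :=
  [set x : 'I_n * 'I_n | (x.1 %/ q == i) && (x.2 %/ q == j)].

Definition block_symbols (n q : nat) (L : 'I_n -> 'I_n -> 'I_n) (i j : nat)
  : {set 'I_n} :=
  [set L x.1 x.2 | x in block_cells n q i j].

(* A latin square of order m*q is of q-step type: each q x q block is a latin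
   subsquare of order q (it contains exactly q symbols), and blocks (i,j),
   (i',j') have the same symbol set iff i + j = i' + j' (mod m). *)
Definition q_step_type (m q : nat) (L : 'I_(m * q) -> 'I_(m * q) -> 'I_(m * q))
  : Prop :=
  (forall i j : 'I_m, #|block_symbols q L i j| = q) /\
  (forall i j i' j' : 'I_m,
      block_symbols q L i j = block_symbols q L i' j' <->
      i + j = i' + j' %[mod m]).

(* Main.v *)
Require Import Defs.
From mathcomp Require Import all_boot.

Lemma sum_fiber (T I : finType) (P : {set T}) (g : T -> I) (f : I -> nat) k :
  (forall r, #|[set x in P | g x == r]| = k) ->
  \sum_(x in P) f (g x) = k * \sum_r f r.
Proof.
move=> H; rewrite (partition_big g xpredT) //= big_distrr /=.
apply: eq_bigr => r _.
rewrite (eq_bigr (fun _ => f r)); last by move=> x /andP[_ /eqP ->].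
rewrite (eq_bigl (mem [set x in P | g x == r])); last by move=> x; rewrite !inE.
by rewrite sum_nat_const H.
Qed.

Lemma band_card (m q : nat) (j : nat) : 0 < q -> j < m ->
  #|[set c : 'I_(m * q) | c %/ q == j]| = q.
Proof.
move=> q0 jm.
have hlt : forall t : 'I_q, j * q + t < m * q.
  move=> t; apply: (@leq_trans (j * q + q)); first by rewrite ltn_add2l.
  by rewrite -[j * q + q]mulSnr leq_mul2r jm orbT.
pose h (t : 'I_q) : 'I_(m * q) := Ordinal (hlt t).
have hinj : injective h.
  by move=> t1 t2 /(congr1 val) /= /addnI /val_inj.
suff -> : [set c : 'I_(m * q) | c %/ q == j] = h @: [set: 'I_q].
  by rewrite card_imset // cardsT card_ord.
apply/setP => c; rewrite inE; apply/eqP/imsetP.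
- move=> cj; have tq : c %% q < q by rewrite ltn_pmod.
  exists (Ordinal tq); first by rewrite inE.
  by apply: val_inj; rewrite /= -cj -divn_eq.
- by case=> t _ ->; rewrite /= divnMDl // divn_small // addn0.
Qed.

Lemma row_band m q (L : 'I_(m * q) -> 'I_(m * q) -> 'I_(m * q))
  (Lat : latin_square L) (i j : 'I_m) (r : 'I_(m * q)) y :
  0 < q -> #|block_symbols q L i j| = q -> r %/ q = i ->
  y \in block_symbols q L i j -> exists c : 'I_(m * q), c %/ q = j /\ L r c = y.
Proof.
move=> q0 HB ri Hy.
have sub : L r @: [set c : 'I_(m * q) | c %/ q == j] \subset block_symbols q L i j.
  apply/subsetP => z /imsetP [c]; rewrite inE => cj ->.
  apply/imsetP; exists (r, c) => //; by rewrite inE /= ri cj eqxx.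
have E : L r @: [set c : 'I_(m * q) | c %/ q == j] = block_symbols q L i j.
  apply/eqP; rewrite eqEcard sub card_imset; last exact: (proj1 Lat r).
  by rewrite HB (@band_card m q j q0 (ltn_ord j)) leqnn.
by move: Hy; rewrite -E => /imsetP [c]; rewrite inE => /eqP cj ->; exists c.
Qed.

Theorem theorem5p1 (q k m : nat) :
  0 < q -> odd q -> 0 < k -> odd k -> 0 < m -> ~~ odd m ->
  forall L : 'I_(m * q) -> 'I_(m * q) -> 'I_(m * q),
    latin_square L -> q_step_type L ->
    ~ exists P : {set 'I_(m * q) * 'I_(m * q)}, kplex L k P.
Proof.
move=> q0 oq k0 ok m0 em L Lat [HB Hiff] [P [_ [Hr [Hc Hs]]]].
have n0 : 0 < m * q by rewrite muln_gt0 m0.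
pose r0 : 'I_(m * q) := Ordinal n0.
have inj0 : injective (L r0) := proj1 Lat r0.
pose col0 := invF inj0.
have bnd : forall x : 'I_(m * q), x %/ q < m.
  by move=> x; rewrite ltn_divLR // ltn_ord.
pose cls (y : 'I_(m * q)) := col0 y %/ q.
have cong : forall r c : 'I_(m * q), (r %/ q + c %/ q) %% m = cls (L r c) %% m.
  move=> r c.
  set y := L r c.
  pose i : 'I_m := Ordinal (bnd r).
  pose j : 'I_m := Ordinal (bnd c).
  pose j' : 'I_m := Ordinal (bnd (col0 y)).
  have im : i <= j' + m by rewrite ltnW // ltn_addl.
  have jm : (j' + m - i) %% m < m by rewrite ltn_pmod.
  pose j'' : 'I_m := Ordinal jm.
  have e1 : i + j'' = 0 + j' %[mod m].
    by rewrite /= modnDmr subnKC // modnDr add0n.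
  have i0 : (0 < m) by [].
  pose z : 'I_m := Ordinal m0.
  have Heq : block_symbols q L i j'' = block_symbols q L z j' by apply/Hiff.
  have yin : y \in block_symbols q L z j'.
    apply/imsetP; exists (r0, col0 y); last by rewrite /= f_invF.
    by rewrite inE /= div0n !eqxx.
  rewrite -Heq in yin.
  have [c' [c'j Lc']] := @row_band m q L Lat i j'' r y q0 (HB i j'') (erefl _) yin.
  have cc : c' = c by apply: (proj1 Lat r); rewrite Lc'.
  by move: e1; rewrite -cc c'j add0n.
pose S := \sum_(r : 'I_(m * q)) r %/ q.
have h1 : \sum_(x in P) (x.1 %/ q + x.2 %/ q) = k * S + k * S.
  rewrite big_split /=.
  have e1 := @sum_fiber _ _ P fst (fun r : 'I_(m * q) => r %/ q) k Hr.
  have e2 := @sum_fiber _ _ P snd (fun r : 'I_(m * q) => r %/ q) k Hc.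
  by rewrite /= in e1 e2; rewrite e1 e2.
have h2 : \sum_(x in P) cls (L x.1 x.2) = k * S.
  have e3 := @sum_fiber _ _ P (fun x => L x.1 x.2) cls k Hs.
  rewrite /= in e3; rewrite e3; congr (k * _).
  rewrite (reindex_inj inj0); apply: eq_bigr => c _.
  by rewrite /cls /col0 invF_f.
have h3 : (k * S + k * S) %% m = (0 + k * S) %% m.
  rewrite add0n -h1 -h2 -[LHS]modn_summ -[RHS]modn_summ; congr (_ %% _).
  by apply: eq_bigr => x _; apply: cong.
move/eqP: h3; rewrite eqn_modDr mod0n => hd.
have hd' : m %| k * S by exact: hd.
have hS : S = q * 'C(m, 2).
  pose g (x : 'I_(m * q)) : 'I_m := Ordinal (bnd x).
  have e4 := @sum_fiber _ _ [set: 'I_(m * q)] g val q.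
  rewrite /= in e4.
  rewrite -bin2_sum big_mkord -e4.
    by apply: eq_bigl => x; rewrite in_setT.
  move=> i; transitivity #|[set c : 'I_(m * q) | c %/ q == i]|;
    last exact: band_card.
  by apply: eq_card => x; rewrite !inE.
have hm : m = (m./2).*2.
  by have := odd_double_half m; rewrite (negbTE em) add0n.
have oM : odd m.-1 by move: em; rewrite -{1}(prednK m0) /= negbK.
have hC : 'C(m, 2) = m./2 * m.-1.
  by rewrite bin2 {1}hm -mul2n -mulnA mul2n doubleK.
move: hd'; rewrite hS hC {1}hm -mul2n.
rewrite [2 * _]mulnC [q * _]mulnCA mulnCA dvdn_pmul2l; last first.
  by rewrite lt0n; apply/negP => /eqP h; move: m0; rewrite hm h.
by rewrite dvdn2 !oddM ok oq oM.
Qed.
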